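(* Let $n\ge 3$ and let $C_n=(v_0,\dots,v_{n-1})$ be the cycle. In the Random Majority Model (RMM) on $C_n$, the only winning set is the set of all nodes. In the Majority Model (MM) on $C_n$, the minimum size of a winning set equals $\lfloor n/2\rfloor+1$.
   Context: A coloring is a map from the nodes to $\{b,w\}$. In MM, all nodes update simultaneously: a node adopts the color strictly more frequent among its neighbors in the previous round and keeps its color in case of a tie. RMM is the same except that in case of a tie the node chooses blue or white independently and uniformly at random. A node set $S$ is a winning set if, whenever all nodes of $S$ are blue (resp. white) initially, the process eventually reaches the coloring in which all nodes are blue (resp. white), regardless of the initial colors of the nodes outside $S$ and of all random choices (in RMM). *)

(* Defs.v *)
From mathcomp Require Import all_boot.
Set Implicit Arguments. Unset Strict Implicit. Unset Printing Implicit Defensive.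

(* Colors: true = blue (b), false = white (w). *)

Section Models.
Variable T : finType.
Variable e : rel T.

Definition nblue (c : T -> bool) (v : T) : nat := #|[set u | e v u && c u]|.
Definition nwhite (c : T -> bool) (v : T) : nat := #|[set u | e v u && ~~ c u]|.

Definition mm_step (c : T -> bool) : T -> bool := fun v =>
  if nwhite c v < nblue c v then true
  else if nblue c v < nwhite c v then false
  else c v.

(* One round of RMM: as MM, but on a tie node v takes the colour coin v
   (the outcome of its independent fair coin flip in this round). *)
Definition rmm_step (coin : T -> bool) (c : T -> bool) : T -> bool := fun v =>
  if nwhite c v < nblue c v then true
  else if nblue c v < nwhite c v then false
  else coin v.

Definition mm_run (c0 : T -> bool) (t : nat) : T -> bool := iter t mm_step c0.

(* Colouring after t rounds of RMM, where coins t v is the random choice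
   available to node v in round t (a realization of all random choices). *)
Fixpoint rmm_run (coins : nat -> T -> bool) (c0 : T -> bool) (t : nat)
  : T -> bool :=
  match t with
  | 0 => c0
  | t'.+1 => rmm_step (coins t') (rmm_run coins c0 t')
  end.

Definition mm_winning (S : {set T}) : Prop :=
  forall (col : bool) (c0 : T -> bool),
    (forall v, v \in S -> c0 v = col) ->
    exists t, forall v, mm_run c0 t v = col.

(* S is a winning set in RMM: the same, regardless also of all random
   choices (i.e. for every realization of the tie-breaking coins). *)
Definition rmm_winning (S : {set T}) : Prop :=
  forall (col : bool) (c0 : T -> bool) (coins : nat -> T -> bool),
    (forall v, v \in S -> c0 v = col) ->
    exists t, forall v, rmm_run coins c0 t v = col.

End Models.

Definition cycle_adj (n : nat) : rel 'I_n :=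
  fun i j => (val j == (val i).+1 %% n) || (val i == (val j).+1 %% n).
Arguments cycle_adj n : clear implicits.

(* Main.v *)
Require Import Defs.
From mathcomp Require Import all_boot zify.

Definition sc (m : nat) (x : 'I_m.+3) : 'I_m.+3 :=
  inord (if nat_of_ord x == m.+2 then 0 else (nat_of_ord x).+1).
Definition pr (m : nat) (x : 'I_m.+3) : 'I_m.+3 :=
  inord (if nat_of_ord x == 0 then m.+2 else (nat_of_ord x).-1).

Arguments sc {m}.
Arguments pr {m}.

Lemma val_sc m (x : 'I_m.+3) : nat_of_ord (sc x) = if nat_of_ord x == m.+2 then 0 else (nat_of_ord x).+1.
Proof. rewrite /sc /= inordK //; have := ltn_ord x; case: eqP; lia. Qed.
Lemma val_pr m (x : 'I_m.+3) : nat_of_ord (pr x) = if nat_of_ord x == 0 then m.+2 else (nat_of_ord x).-1.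
Proof. rewrite /pr /= inordK //; have := ltn_ord x; case: eqP; lia. Qed.

Lemma pr_sc m (x : 'I_m.+3) : pr (sc x) = x.
Proof. apply/val_inj => /=; rewrite val_pr val_sc; have := ltn_ord x;
  case: (nat_of_ord x =P m.+2) => E /=; lia. Qed.
Lemma sc_pr m (x : 'I_m.+3) : sc (pr x) = x.
Proof. apply/val_inj => /=; rewrite val_sc val_pr; have := ltn_ord x;
  case: (nat_of_ord x =P 0) => E /=; rewrite ?eqxx; first lia; case: eqP; lia. Qed.
Lemma sc_inj m : injective (@sc m).
Proof. move=> x y h; by have := congr1 pr h; rewrite !pr_sc. Qed.
Lemma sc_neq_pr m (x : 'I_m.+3) : sc x != pr x.
Proof. apply/eqP=> /(congr1 val) /=; rewrite val_sc val_pr; have := ltn_ord x;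
  case: (nat_of_ord x =P m.+2); case: (nat_of_ord x =P 0); lia. Qed.

Lemma adjE m (x u : 'I_m.+3) : cycle_adj m.+3 x u = (u == sc x) || (u == pr x).
Proof.
rewrite /cycle_adj -!val_eqE /= val_sc val_pr.
have := ltn_ord x; have := ltn_ord u => hu hx.
congr orb.
  case: (nat_of_ord x =P m.+2) => E.
    by rewrite E modnn.
  by rewrite modn_small //; lia.
case: (nat_of_ord u =P m.+2) => E.
  rewrite E modnn; case: (nat_of_ord x =P 0) => ?; apply/eqP/eqP; lia.
rewrite modn_small; last lia.
case: (nat_of_ord x =P 0) => ?; apply/eqP/eqP; lia.
Qed.

Lemma card2 m (s p : 'I_m.+3) (P : pred 'I_m.+3) : s != p ->
  #|[set u | ((u == s) || (u == p)) && P u]| = P s + P p.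
Proof.
move=> nsp.
have E : forall u, (((u == s) || (u == p)) && P u) =
   ((u == s) && P s) || ((u == p) && P p).
  by move=> u; case: (eqVneq u s) => [<-|_]; case: (eqVneq u p) => [<-|_];
     rewrite /= ?eqxx ?andbF ?orbF ?orbb //; case: (P _).
case Ps: (P s); case Pp: (P p).
- have -> : [set u | ((u == s) || (u == p)) && P u] = [set s; p].
    by apply/setP=> u; rewrite !inE E Ps Pp !andbT.
  by rewrite cards2 nsp.
- have -> : [set u | ((u == s) || (u == p)) && P u] = [set s].
    by apply/setP=> u; rewrite !inE E Ps Pp !andbT andbF orbF.
  by rewrite cards1.
- have -> : [set u | ((u == s) || (u == p)) && P u] = [set p].
    by apply/setP=> u; rewrite !inE E Ps Pp !andbT andbF.
  by rewrite cards1.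
- have -> : [set u | ((u == s) || (u == p)) && P u] = set0.
    by apply/setP=> u; rewrite !inE E Ps Pp !andbF.
  by rewrite cards0.
Qed.

Lemma nblueE m (c : 'I_m.+3 -> bool) x :
  nblue (cycle_adj m.+3) c x = c (sc x) + c (pr x).
Proof.
rewrite /nblue.
have -> : [set u | cycle_adj m.+3 x u && c u] = [set u | ((u == sc x) || (u == pr x)) && c u].
  by apply/setP=> u; rewrite !inE adjE.
by rewrite (card2 _ _ _ c (sc_neq_pr _ x)).
Qed.

Lemma nwhiteE m (c : 'I_m.+3 -> bool) x :
  nwhite (cycle_adj m.+3) c x = ~~ c (sc x) + ~~ c (pr x).
Proof.
rewrite /nwhite.
have -> : [set u | cycle_adj m.+3 x u && ~~ c u] = [set u | ((u == sc x) || (u == pr x)) && (predC c) u].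
  by apply/setP=> u; rewrite !inE adjE.
by rewrite (card2 _ _ _ _ (sc_neq_pr _ x)).
Qed.

Lemma mm_stepE m (c : 'I_m.+3 -> bool) x :
  mm_step (cycle_adj m.+3) c x = if c (sc x) == c (pr x) then c (sc x) else c x.
Proof. rewrite /mm_step nblueE nwhiteE; by case: (c (sc x)); case: (c (pr x)). Qed.

Lemma rmm_stepE m coin (c : 'I_m.+3 -> bool) x :
  rmm_step (cycle_adj m.+3) coin c x = if c (sc x) == c (pr x) then c (sc x) else coin x.
Proof. rewrite /rmm_step nblueE nwhiteE; by case: (c (sc x)); case: (c (pr x)). Qed.

Lemma mm_runS m c0 t : mm_run (cycle_adj m.+3) c0 t.+1 =
  mm_step (cycle_adj m.+3) (mm_run (cycle_adj m.+3) c0 t).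
Proof. by rewrite /mm_run iterS. Qed.

Lemma rmm_part m (S : {set 'I_m.+3}) : rmm_winning (cycle_adj m.+3) S <-> S = setT.
Proof.
split; last first.
  by move=> -> col c0 coins H; exists 0 => v /=; apply: H; rewrite inE.
move=> W; apply/setP=> v; rewrite inE; apply/negPn/negP => nv.
have hS : forall u, u \in S -> (u != v) = true.
  by move=> u uS; apply/eqP => E; subst u; rewrite uS in nv.
have [t Ht] := W true (fun u => u != v) (fun _ _ => false) hS.
suff [w Hw] : exists w, rmm_run (cycle_adj m.+3) (fun _ _ => false) (fun u => u != v) t w = false.
  by rewrite Ht in Hw.
elim: t {Ht} => [|t [w Hw]]; first by exists v; rewrite /= eqxx.
exists (sc w) => /=; rewrite rmm_stepE pr_sc Hw.
by case: ifP => // /eqP.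
Qed.

Lemma mm_lower m (S : {set 'I_m.+3}) :
  mm_winning (cycle_adj m.+3) S -> (m.+3)./2.+1 <= #|S|.
Proof.
move=> W; rewrite leqNgt; apply/negP => hS.
have [t Ht] := W true (fun u => u \in S) (fun u h => h).
case: (boolP [exists x, (x \notin S) && (sc x \notin S)]) => [/existsP [x /andP [nx nsx]] | /existsPn H].
  suff: forall k, mm_run (cycle_adj m.+3) (fun u => u \in S) k x = false /\
                  mm_run (cycle_adj m.+3) (fun u => u \in S) k (sc x) = false.
    by case/(_ t); rewrite Ht.
  elim=> [|k [h1 h2]]; first by split; apply/negbTE.
  rewrite !mm_runS !mm_stepE pr_sc h1 h2.
  by split; [case: ifP | case: ifP => // /eqP].
have alt : forall x, (sc x \in S) = (x \notin S).
  move=> x; case xS: (x \in S) => /=; last by move: (H x); rewrite xS /= negbK.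
  apply/negP => sxS.
  have sub : sc @: (~: S) \subset S :\ sc x.
    apply/subsetP => y /imsetP [z zS ->]; rewrite !inE.
    rewrite inE in zS.
    move: (H z); rewrite zS /= negbK => ->; rewrite andbT.
    apply/negP => /eqP /sc_inj E; subst z; by rewrite xS in zS.
  have c1 : #|S| + #|~: S| = m.+3 by rewrite cardsC card_ord.
  have c2 : #|S| = (#|S :\ sc x|).+1 by rewrite (cardsD1 (sc x) S) sxS.
  have c3 : #|~: S| <= #|S :\ sc x|.
    by rewrite -(card_imset _ (@sc_inj m)); exact: subset_leq_card sub.
  have hS2 : #|S| <= (m.+3)./2 by exact: hS.
  have := odd_double_half (m.+3).
  move: hS2; move: (odd (m.+3)) ((m.+3)./2) => b h; rewrite -muln2; case: b => /=; lia.
pose P (c : 'I_m.+3 -> bool) := forall y, c (sc y) = ~~ c y.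
have step : forall c, P c -> forall y, mm_step (cycle_adj m.+3) c y = ~~ c y.
  move=> c Pc y; rewrite mm_stepE.
  have : c (pr y) = ~~ c y by have := Pc (pr y); rewrite sc_pr => ->; rewrite negbK.
  by move=> ->; rewrite Pc eqxx.
have inv : forall k, P (mm_run (cycle_adj m.+3) (fun u => u \in S) k).
  elim=> [|k IH] y; first by rewrite /mm_run /= alt.
  by rewrite !mm_runS !step // IH.
by have := inv t ord0; rewrite !Ht.
Qed.

Definition S0 m : {set 'I_m.+3} :=
  [set x : 'I_m.+3 | (nat_of_ord x == 0) || (nat_of_ord x %% 2 == 1)].

Lemma sum_S0 (N : nat) : \sum_(i < N) ((nat_of_ord i == 0) || (nat_of_ord i %% 2 == 1)) = N./2 + (0 < N).
Proof. elim: N => [|N IH]; first by rewrite big_ord0.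
rewrite big_ord_recr /= IH modn2.
have := odd_double_half N; have := odd_double_half N.+1; rewrite /= .
case: (odd N) => /=; lia. Qed.

Lemma card_S0 m : #|S0 m| = (m.+3)./2.+1.
Proof.
rewrite -sum1_card big_mkcond /=.
rewrite (eq_bigr (fun i : 'I_m.+3 => nat_of_bool ((nat_of_ord i == 0) || (nat_of_ord i %% 2 == 1)))).
  by rewrite sum_S0 addn1.
by move=> i _; rewrite inE; case: (_ || _).
Qed.

Definition L m (t : nat) (x : 'I_m.+3) : bool :=
  (nat_of_ord x <= t.+1) || (m.+3 - t <= nat_of_ord x) || ((nat_of_ord x + t) %% 2 == 1).

Arguments L {m}.

Lemma L_step m t (x : 'I_m.+3) : L t.+1 x ->
  (L t (sc x) && L t (pr x)) || (L t x && (L t (sc x) || L t (pr x))).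
Proof.
rewrite /L val_sc val_pr; have := ltn_ord x.
case: (nat_of_ord x =P m.+2) => E1; case: (nat_of_ord x =P 0) => E2; lia.
Qed.

Lemma win_true m (c0 : 'I_m.+3 -> bool) : (forall x, x \in S0 m -> c0 x) ->
  forall x, mm_run (cycle_adj m.+3) c0 (m.+3) x = true.
Proof.
move=> H.
suff: forall t x, L t x -> mm_run (cycle_adj m.+3) c0 t x.
  by move=> h x; apply: h; rewrite /L; have := ltn_ord x; lia.
elim=> [|t IH] x.
  move=> Lx; apply: H; rewrite inE; move: Lx; rewrite /L; have := ltn_ord x; lia.
move=> /L_step hL; rewrite mm_runS mm_stepE.
move: hL (IH (sc x)) (IH x) (IH (pr x)).
move: (L t (sc x)) (L t x) (L t (pr x)) => [] [] [] //= _;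
move: (mm_run (cycle_adj m.+3) c0 t (sc x)) (mm_run (cycle_adj m.+3) c0 t x)
  (mm_run (cycle_adj m.+3) c0 t (pr x)) => [] [] [] //= h1 h2 h3;
  by [have := h1 isT | have := h2 isT | have := h3 isT].
Qed.

Lemma mm_run_neg m c0 t x :
  mm_run (cycle_adj m.+3) (fun y => ~~ c0 y) t x = ~~ mm_run (cycle_adj m.+3) c0 t x.
Proof.
elim: t x => [|t IH] x; first by rewrite /mm_run.
rewrite !mm_runS !mm_stepE !IH.
by case: (mm_run _ c0 t (sc x)); case: (mm_run _ c0 t (pr x)); case: (mm_run _ c0 t x).
Qed.

Lemma S0_win m : mm_winning (cycle_adj m.+3) (S0 m).
Proof.
move=> [] c0 H.
  by exists (m.+3); apply: win_true => x /H ->.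
have Hx : forall x, mm_run (cycle_adj m.+3) (fun y => ~~ c0 y) (m.+3) x = true.
  by apply: win_true => x /H ->.
exists (m.+3) => v; have := Hx v; rewrite mm_run_neg.
by case: (mm_run _ c0 _ v).
Qed.

Theorem theorem3p2 (n : nat) (hn : 3 <= n) :
  (forall S : {set 'I_n}, rmm_winning (cycle_adj n) S <-> S = setT) /\
  ((exists S : {set 'I_n}, mm_winning (cycle_adj n) S /\ #|S| = n./2.+1) /\
   (forall S : {set 'I_n}, mm_winning (cycle_adj n) S -> n./2.+1 <= #|S|)).
Proof.
case: n hn => [|[|[|m]]] // _.
split; first exact: rmm_part.
split; last exact: mm_lower.
by exists (S0 m); split; [exact: S0_win | exact: card_S0].
Qed.
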